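(* Let $\Lambda=K\mathcal{Q}/I$ be a finite-dimensional algebra over a field $K$ as in the context, let $A\geqslant1$, let $\tilde{\Lambda}=\tilde{\Lambda}_A$ be its stretched algebra, $\varepsilon=\sum_{v\in\mathcal{Q}_0}v\in\tilde{\Lambda}$ and $B=\varepsilon\tilde{\Lambda}\varepsilon$. Then: (1) $\tilde{\Lambda}\varepsilon$ is projective as a right $B$-module; (2) $\varepsilon\tilde{\Lambda}$ is projective as a left $B$-module.
   Context: Conventions: $\mathcal{Q}$ is a finite quiver with vertex set $\mathcal{Q}_0$; $\mathfrak{o}(\alpha)$, $\mathfrak{t}(\alpha)$ denote start and end of an arrow; paths are written left to right. An element $x\in K\mathcal{Q}$ is uniform if $x=vx=xv'$ for vertices $v,v'$. $\Lambda=K\mathcal{Q}/I$ is finite-dimensional with $I$ an admissible ideal generated by a minimal set $\{g^2_1,\dots,g^2_m\}$ of uniform elements. Stretched algebra: for $A\geqslant1$, the quiver $\tilde{\mathcal{Q}}_A$ has all vertices of $\mathcal{Q}$ plus, for each arrow $\alpha$ of $\mathcal{Q}$, new vertices $w_1,\dots,w_{A-1}$; each arrow $\alpha$ is replaced by arrows $\alpha_1,\dots,\alpha_A$ with $\mathfrak{o}(\alpha_1)=\mathfrak{o}(\alpha)$, $\mathfrak{t}(\alpha_j)=\mathfrak{o}(\alpha_{j+1})=w_j$ ($1\le j\le A-1$), $\mathfrak{t}(\alpha_A)=\mathfrak{t}(\alpha)$, and the only arrows incident with $w_j$ are $\alpha_j,\alpha_{j+1}$. $\theta^*:K\mathcal{Q}\to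 K\tilde{\mathcal{Q}}_A$ is the algebra homomorphism fixing vertices and sending $\alpha\mapsto\alpha_1\cdots\alpha_A$; $\tilde{I}_A$ is the ideal generated by $\theta^*(g^2_1),\dots,\theta^*(g^2_m)$; $\tilde{\Lambda}_A=K\tilde{\mathcal{Q}}_A/\tilde{I}_A$. *)

(* Defs.v *)
(* Path algebras KQ are modelled by formal finite K-linear
   combinations of (valid) paths, compared coefficientwise; quotients
   KQ/I are modelled as setoids (equality modulo membership in I). *)
From HB Require Import structures.
From mathcomp Require Import all_boot all_order all_algebra.
Set Implicit Arguments. Unset Strict Implicit. Unset Printing Implicit Defensive.
Import GRing.Theory.
Local Open Scope ring_scope.

Section Quiver.
Variables (V E : finType) (s t : E -> V).

(* a path (written left to right) from vertex x.1 following arrows x.2 *)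
Definition valid (x : V * seq E) : bool :=
  match x.2 with
  | [::] => true
  | a :: p => (s a == x.1) && path (fun a b => t a == s b) a p
  end.

Record qpath := QPath { qp_val : V * seq E ; qp_valid : valid qp_val }.
HB.instance Definition _ := [isSub for qp_val].
HB.instance Definition _ := [Equality of qpath by <:].

Definition ev (v : V) : qpath := @QPath (v, [::]) isT.
Definition plen (p : qpath) : nat := size (qp_val p).2.
Definition pend (p : qpath) : V := last (qp_val p).1 (map t (qp_val p).2).
(* product of paths: concatenation if composable, otherwise 0 (None) *)
Definition pmul (p q : qpath) : option qpath :=
  if pend p == (qp_val q).1
  then insub ((qp_val p).1, (qp_val p).2 ++ (qp_val q).2) else None.

Variable K : fieldType.
(* elements of the path algebra KQ: formal finite sums  sum c_i p_i *)
Definition kq := seq (K * qpath).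
Definition coef (x : kq) (p : qpath) : K := \sum_(c <- x | c.2 == p) c.1.
Definition eqkq (x y : kq) : Prop := forall p, coef x p = coef y p.
Definition kq_add (x y : kq) : kq := x ++ y.
Definition kq_opp (x : kq) : kq := [seq (- c.1, c.2) | c <- x].
Definition kq_mul (x y : kq) : kq :=
  flatten (allpairs (fun a b => if pmul a.2 b.2 is Some r then [:: (a.1 * b.1, r)]
                                else [::]) x y).
Definition kq_path (p : qpath) : kq := [:: (1, p)].

Definition inIdeal (m : nat) (P : pred 'I_m) (g : 'I_m -> kq) (x : kq) : Prop :=
  exists l : seq (K * qpath * 'I_m * qpath),
    all (fun c => P c.1.2) l /\
    eqkq x (flatten [seq kq_mul (kq_mul [:: (c.1.1.1, c.1.1.2)] (g c.1.2)) (kq_path c.2)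
                    | c <- l]).

Definition eqv (m : nat) (g : 'I_m -> kq) (x y : kq) : Prop :=
  inIdeal predT g (kq_add x (kq_opp y)).

Definition uniform (x : kq) : Prop :=
  exists v v' : V, eqkq x (kq_mul (kq_path (ev v)) x) /\ eqkq x (kq_mul x (kq_path (ev v'))).

(* <g> is admissible: R^n <= <g> <= R^2 for some n >= 2, R the arrow ideal *)
Definition admissible (m : nat) (g : 'I_m -> kq) : Prop :=
  (forall j p, coef (g j) p != 0 -> (2 <= plen p)%N) /\
  exists n, (2 <= n)%N /\ forall p, (n <= plen p)%N -> inIdeal predT g (kq_path p).

Definition minimal_gens (m : nat) (g : 'I_m -> kq) : Prop :=
  forall i, ~ inIdeal (predC1 i) g (g i).

End Quiver.

(* The stretched quiver tilde Q_A (A >= 1): new vertices w_1..w_{A-1} per arrow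
   (encoded inr (alpha, j) with j : 'I_(A-1), j = index-1), arrows alpha_1..alpha_A
   (encoded (alpha, j) with j : 'I_A, j = index-1). *)
Section Stretch.
Variables (V E : finType) (s t : E -> V) (A : nat).

Definition sV := (V + (E * 'I_(A.-1)))%type.
Definition sE := (E * 'I_(A.-1).+1)%type.
Definition ss (a : sE) : sV :=
  if unlift ord0 a.2 is Some j then inr (a.1, j) else inl (s a.1).
Definition st (a : sE) : sV :=
  if unlift ord_max a.2 is Some j then inr (a.1, j) else inl (t a.1).

(* theta^* on paths: alpha |-> alpha_1 ... alpha_A, vertices fixed *)
Definition theta_path (p : qpath s t) : option (qpath ss st) :=
  insub (inl (qp_val p).1 : sV,
         flatten [seq [seq (a, j) | j <- enum 'I_(A.-1).+1] | a <- (qp_val p).2]).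

Variable K : fieldType.
Definition theta (x : kq s t K) : kq ss st K :=
  pmap (fun c : K * qpath s t => omap (fun q => (c.1, q)) (theta_path c.2)) x.

Definition eps : kq ss st K := [seq (1, ev ss st (inl v)) | v <- enum V].
End Stretch.

(* M is a direct summand of a free B-module B^n (i.e. a projective module):
   f : M -> B^n and h : B^n -> M are B-linear with h o f = id_M.
   T is a setoid-presented ring (equality eqv), inB / inM carve out B and M. *)
Definition right_projective (T : Type) (eqv : T -> T -> Prop) (add mul : T -> T -> T)
    (inB inM : T -> Prop) : Prop :=
  exists n (f : T -> 'I_n -> T) (h : ('I_n -> T) -> T),
    (forall x, inM x -> forall i, inB (f x i)) /\
    (forall x y, inM x -> inM y -> eqv x y -> forall i, eqv (f x i) (f y i)) /\
    (forall x y, inM x -> inM y -> forall i, eqv (f (add x y) i) (add (f x i) (f y i))) /\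
    (forall x b, inM x -> inB b -> forall i, eqv (f (mul x b) i) (mul (f x i) b)) /\
    (forall u, (forall i, inB (u i)) -> inM (h u)) /\
    (forall u v, (forall i, inB (u i)) -> (forall i, inB (v i)) ->
       (forall i, eqv (u i) (v i)) -> eqv (h u) (h v)) /\
    (forall u v, (forall i, inB (u i)) -> (forall i, inB (v i)) ->
       eqv (h (fun i => add (u i) (v i))) (add (h u) (h v))) /\
    (forall u b, (forall i, inB (u i)) -> inB b ->
       eqv (h (fun i => mul (u i) b)) (mul (h u) b)) /\
    (forall x, inM x -> eqv (h (f x)) x).

Definition left_projective (T : Type) (eqv : T -> T -> Prop) (add mul : T -> T -> T)
    (inB inM : T -> Prop) : Prop :=
  exists n (f : T -> 'I_n -> T) (h : ('I_n -> T) -> T),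
    (forall x, inM x -> forall i, inB (f x i)) /\
    (forall x y, inM x -> inM y -> eqv x y -> forall i, eqv (f x i) (f y i)) /\
    (forall x y, inM x -> inM y -> forall i, eqv (f (add x y) i) (add (f x i) (f y i))) /\
    (forall x b, inM x -> inB b -> forall i, eqv (f (mul b x) i) (mul b (f x i))) /\
    (forall u, (forall i, inB (u i)) -> inM (h u)) /\
    (forall u v, (forall i, inB (u i)) -> (forall i, inB (v i)) ->
       (forall i, eqv (u i) (v i)) -> eqv (h u) (h v)) /\
    (forall u v, (forall i, inB (u i)) -> (forall i, inB (v i)) ->
       eqv (h (fun i => add (u i) (v i))) (add (h u) (h v))) /\
    (forall u b, (forall i, inB (u i)) -> inB b ->
       eqv (h (fun i => mul b (u i))) (mul b (h u))) /\
    (forall x, inM x -> eqv (h (f x)) x).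

(* Main.v *)
From HB Require Import structures.
From mathcomp Require Import all_boot all_order all_algebra.
Require Import Defs.
From mathcomp Require Import zify.
Set Implicit Arguments. Unset Strict Implicit. Unset Printing Implicit Defensive.
Import GRing.Theory.

Local Open Scope ring_scope.

Section Gen.
Variables (V E : finType) (s t : E -> V).

Fixpoint walk (v : V) (l : seq E) : bool :=
  if l is a :: l' then (s a == v) && walk (t a) l' else true.

Lemma walk_path a l : walk (t a) l = path (fun a b => t a == s b) a l.
Proof. by elim: l a => [|b l IH] a //=; rewrite IH eq_sym. Qed.

Lemma valid_walk v l : valid s t (v, l) = walk v l.
Proof. by case: l => [|a l] //=; rewrite walk_path. Qed.

Lemma walk_cat v l1 l2 :
  walk v (l1 ++ l2) = walk v l1 && walk (last v (map t l1)) l2.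
Proof. by elim: l1 v => [|a l IH] v //=; rewrite IH andbA. Qed.

Lemma walk_rcons v l a :
  walk v (rcons l a) = walk v l && (s a == last v (map t l)).
Proof. by rewrite -cats1 walk_cat /= andbT. Qed.

Definition start (p : qpath s t) : V := (qp_val p).1.
Definition arr (p : qpath s t) : seq E := (qp_val p).2.

Lemma qpath_walk p : walk (start p) (arr p).
Proof. by rewrite -valid_walk; case: p => [[v l] H]. Qed.

Lemma pendE p : pend p = last (start p) (map t (arr p)).
Proof. by []. Qed.

Lemma qpath_eq p q : start p = start q -> arr p = arr q -> p = q.
Proof.
move=> H1 H2; apply: val_inj => /=.
by move: H1 H2; rewrite /start /arr; case: (qp_val p) => ??; case: (qp_val q) => ?? /= -> ->.
Qed.

Variant pmul_spec (p q : qpath s t) : option (qpath s t) -> Type :=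
| PmulSome r of pend p = start q & start r = start p & arr r = arr p ++ arr q :
    pmul_spec p q (Some r)
| PmulNone of pend p <> start q : pmul_spec p q None.

Lemma pmulP p q : pmul_spec p q (pmul p q).
Proof.
rewrite /pmul; case: eqP => H; last by constructor.
case: insubP => [u _ Hu|Hn].
  by constructor => //; rewrite /start /arr Hu.
exfalso; move: Hn; rewrite valid_walk walk_cat qpath_walk /=.
by rewrite -pendE H qpath_walk.
Qed.

Lemma pend_cat p q r : pend p = start q -> start r = start p ->
  arr r = arr p ++ arr q -> pend r = pend q.
Proof.
by move=> H1 H2 H3; rewrite !pendE H3 H2 map_cat last_cat -pendE H1.
Qed.

Lemma pmul_assoc (a b c : qpath s t) :
  obind (fun r => pmul r c) (pmul a b) = obind (pmul a) (pmul b c).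
Proof.
case: (pmulP a b) => [ab H1 H2 H3|H1]; case: (pmulP b c) => [bc H4 H5 H6|H4] /=.
- case: pmulP => [x H7 H8 H9|H7]; case: pmulP => [y H10 H11 H12|H10] //.
  + congr Some; apply: qpath_eq; first by rewrite H8 H11 H2.
    by rewrite H9 H12 H3 H6 catA.
  + by case: H10; rewrite H5.
  + by case: H7; rewrite (pend_cat H1 H2 H3).
- by case: pmulP => // x; rewrite (pend_cat H1 H2 H3).
- by case: pmulP => // x; rewrite H5.
- by [].
Qed.

Lemma pmul_ev_l v (q : qpath s t) : pmul (ev s t v) q = if start q == v then Some q else None.
Proof.
case: pmulP => [r H1 H2 H3|H1].
  rewrite -H1 eqxx; congr Some; apply: qpath_eq; first by rewrite H2 -H1.
  by rewrite H3.
by case: eqP => // Hq; case: H1; rewrite Hq.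
Qed.

Lemma pmul_ev_r v (q : qpath s t) : pmul q (ev s t v) = if pend q == v then Some q else None.
Proof.
case: pmulP => [r H1 H2 H3|H1].
  rewrite H1 eqxx; congr Some; apply: qpath_eq; first by rewrite H2.
  by rewrite H3 cats0.
by case: eqP.
Qed.

End Gen.

Local Close Scope ring_scope.

Local Open Scope ring_scope.

Section KQ.
Variables (V E : finType) (s t : E -> V) (K : fieldType).
Local Notation qp := (qpath s t).
Local Notation kq := (kq s t K).
Implicit Types (x y : kq) (p q : qp) (F : qp -> K).

Definition pair (x : kq) (F : qp -> K) : K := \sum_(c <- x) c.1 * F c.2.

Lemma pair_nil F : pair [::] F = 0. Proof. by rewrite /pair big_nil. Qed.
Lemma pair_cons c x F : pair (c :: x) F = c.1 * F c.2 + pair x F.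
Proof. by rewrite /pair big_cons. Qed.
Lemma pair_cat x y F : pair (x ++ y) F = pair x F + pair y F.
Proof. by rewrite /pair big_cat. Qed.
Lemma pair_flatten L F : pair (flatten L) F = \sum_(l <- L) pair l F.
Proof. by rewrite /pair big_flatten. Qed.
Lemma pair1 k p F : pair [:: (k, p)] F = k * F p.
Proof. by rewrite pair_cons pair_nil addr0. Qed.
Lemma pair_opp x F : pair (kq_opp x) F = - pair x F.
Proof.
elim: x => [|c x IH]; first by rewrite /= !pair_nil oppr0.
by rewrite /= !pair_cons IH opprD mulNr.
Qed.
Lemma pair_ext x F G : F =1 G -> pair x F = pair x G.
Proof. by move=> H; apply: eq_bigr => c _; rewrite H. Qed.
Lemma pair0 x : pair x (fun _ => 0) = 0.
Proof. by rewrite /pair big1 // => c _; rewrite mulr0. Qed.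
Lemma pair_zero x F : (forall p, F p = 0) -> pair x F = 0.
Proof. by move=> H; rewrite (pair_ext x H) pair0. Qed.
Lemma pairD x F G : pair x (fun p => F p + G p) = pair x F + pair x G.
Proof. by rewrite /pair -big_split; apply: eq_bigr => c _; rewrite mulrDr. Qed.
Lemma pairZ x k F : pair x (fun p => k * F p) = k * pair x F.
Proof. by rewrite /pair mulr_sumr; apply: eq_bigr => c _; rewrite mulrCA. Qed.
Lemma pair_sum x (I : Type) (r : seq I) (F : I -> qp -> K) :
  pair x (fun p => \sum_(i <- r) F i p) = \sum_(i <- r) pair x (F i).
Proof.
rewrite /pair exchange_big /=; apply: eq_bigr => c _; by rewrite mulr_sumr.
Qed.

Lemma coef_pair x p : coef x p = pair x (fun q => (q == p)%:R).
Proof.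
rewrite /coef /pair big_mkcond /=; apply: eq_bigr => c _.
by case: eqP => _; rewrite ?mulr1 ?mulr0.
Qed.

Lemma pair_supp x (S : seq qp) F : uniq S -> {subset map snd x <= S} ->
  pair x F = \sum_(q <- S) coef x q * F q.
Proof.
move=> US; elim: x => [|c x IH] HS.
  by rewrite pair_nil big1 // => q _; rewrite coef_pair pair_nil mul0r.
rewrite pair_cons IH; last by move=> q Hq; apply: HS; rewrite /= inE Hq orbT.
under [RHS]eq_bigr => q _ do rewrite coef_pair pair_cons -coef_pair mulrDl.
rewrite big_split /=; congr (_ + _).
have Hc : c.2 \in S by apply: HS; rewrite /= inE eqxx.
rewrite (bigD1_seq c.2) //= eqxx mulr1 big1 ?addr0 // => q /negbTE Hq.
by rewrite eq_sym Hq mulr0 mul0r.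
Qed.

Lemma pair_eqkq x y F : eqkq x y -> pair x F = pair y F.
Proof.
move=> H; set S := undup (map snd (x ++ y)).
have US : uniq S by apply: undup_uniq.
rewrite (@pair_supp x S) // ?(@pair_supp y S) //.
- by apply: eq_bigr => q _; rewrite H.
- by move=> q Hq; rewrite mem_undup map_cat mem_cat Hq orbT.
- by move=> q Hq; rewrite mem_undup map_cat mem_cat Hq.
Qed.

Lemma eqkq_pair x y : (forall F, pair x F = pair y F) -> eqkq x y.
Proof. by move=> H p; rewrite !coef_pair H. Qed.

Lemma eqkq_refl x : eqkq x x. Proof. by []. Qed.
Lemma eqkq_sym x y : eqkq x y -> eqkq y x. Proof. by move=> H p. Qed.
Lemma eqkq_trans x y z : eqkq x y -> eqkq y z -> eqkq x z.
Proof. by move=> H1 H2 p; rewrite H1. Qed.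

Lemma pair_mul x y F : pair (kq_mul x y) F =
  pair x (fun a => pair y (fun b => oapp F 0 (pmul a b))).
Proof.
rewrite /kq_mul pair_flatten /pair big_allpairs_dep /=.
apply: eq_bigr => a _; rewrite mulr_sumr; apply: eq_bigr => b _.
case: pmul => [r|] /=; rewrite ?big_cons ?big_nil ?addr0 ?mulr0 //.
by rewrite mulrA.
Qed.

Definition lift (phi : qp -> option qp) (x : kq) : kq :=
  pmap (fun c : K * qp => omap (fun q => (c.1, q)) (phi c.2)) x.

Lemma pair_lift phi x F : pair (lift phi x) F = pair x (fun a => oapp F 0 (phi a)).
Proof.
rewrite /lift /pair big_pmap; apply: eq_bigr => c _.
by case: phi => [q|] /=; rewrite ?mulr0.
Qed.

Lemma pair_path p F : pair (kq_path K p) F = F p.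
Proof. by rewrite /kq_path pair1 mul1r. Qed.

Variables (m : nat) (G : 'I_m -> kq).
Definition I x := inIdeal predT G x.
Definition gterm (c : K * qp * 'I_m * qp) : kq :=
  kq_mul (kq_mul [:: (c.1.1.1, c.1.1.2)] (G c.1.2)) (kq_path K c.2).

Lemma pair_gterm k p j q F : pair (gterm (k, p, j, q)) F =
  k * pair (G j) (fun b => oapp F 0 (obind (fun r => pmul r q) (pmul p b))).
Proof.
rewrite /gterm pair_mul pair_mul pair1; congr (_ * _); apply: pair_ext => b.
by case: pmul => [r|] //=; rewrite pair_path.
Qed.

Lemma I_eqkq x y : eqkq x y -> I y -> I x.
Proof. by move=> H [l [Hl Hy]]; exists l; split => //; apply: eqkq_trans Hy. Qed.
Lemma I_nil : I [::]. Proof. by exists [::]. Qed.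
Lemma I_cat x y : I x -> I y -> I (x ++ y).
Proof.
move=> [l1 [_ H1]] [l2 [_ H2]]; exists (l1 ++ l2); split; first by apply/allP.
by rewrite map_cat flatten_cat => p; rewrite /coef !big_cat /= -!/(coef _ _) H1 H2.
Qed.
Lemma I_flatten L : (forall x, x \in L -> I x) -> I (flatten L).
Proof.
elim: L => [|x L IH] H /=; first exact: I_nil.
by apply: I_cat; [apply: H; rewrite inE eqxx | apply: IH => y Hy; apply: H; rewrite inE Hy orbT].
Qed.
Lemma I_gterm c : I (gterm c).
Proof. by exists [:: c]; split => //=; rewrite cats0. Qed.
Lemma I_gen_sum l : eqkq (flatten [seq gterm c | c <- l]) (flatten
    [seq kq_mul (kq_mul [:: (c.1.1.1, c.1.1.2)] (G c.1.2)) (kq_path K c.2) | c <- l]).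
Proof. by []. Qed.

Lemma I_flat_map (T : Type) (l : seq T) (f : T -> kq) :
  (forall c, I (f c)) -> I (flatten (map f l)).
Proof. by move=> H; elim: l => [|c l IH] /=; [exact: I_nil | apply: I_cat]. Qed.

Lemma I_opp x : I x -> I (kq_opp x).
Proof.
move=> [l [_ Hl]].
exists [seq (- c.1.1.1, c.1.1.2, c.1.2, c.2) | c <- l]; split; first by apply/allP.
apply: eqkq_pair => F; rewrite pair_opp (pair_eqkq F Hl).
rewrite -!/(gterm _) !pair_flatten !big_map -sumrN; apply: eq_bigr => -[[[k p] j] q] _.
by rewrite !pair_gterm mulNr.
Qed.

Lemma mul_flatten_r x L : eqkq (kq_mul x (flatten L)) (flatten (map (kq_mul x) L)).
Proof.
apply: eqkq_pair => F; rewrite pair_mul pair_flatten big_map.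
under eq_bigr => l _ do rewrite pair_mul.
by rewrite -pair_sum; apply: pair_ext => a; rewrite pair_flatten.
Qed.

Lemma mul_flatten_l x L : eqkq (kq_mul (flatten L) x) (flatten (map (fun y => kq_mul y x) L)).
Proof.
apply: eqkq_pair => F; rewrite pair_mul !pair_flatten big_map.
by under [RHS]eq_bigr => l _ do rewrite pair_mul.
Qed.

Lemma mul_eqkq x x' y y' : eqkq x x' -> eqkq y y' -> eqkq (kq_mul x y) (kq_mul x' y').
Proof.
move=> Hx Hy; apply: eqkq_pair => F; rewrite !pair_mul (pair_eqkq _ Hx).
by apply: pair_ext => a; apply: pair_eqkq.
Qed.

Lemma kq_split x : x = flatten [seq [:: c] | c <- x].
Proof. by elim: x => //= c x <-. Qed.

Lemma oappE F (g : qp -> option qp) o :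
  oapp (fun z => oapp F 0 (g z)) 0 o = oapp F 0 (obind g o).
Proof. by case: o. Qed.
Lemma oappZ (k : K) F o : oapp (fun z => k * F z) 0 o = k * oapp F 0 o.
Proof. by case: o => //=; rewrite mulr0. Qed.

Lemma obind_comm (u q : qp) (X : option qp) :
  obind (pmul u) (obind (fun r => pmul r q) X) = obind (fun r => pmul r q) (obind (pmul u) X).
Proof. by case: X => //= w; rewrite pmul_assoc. Qed.

Lemma obind_comm2 (u q : qp) (X : option qp) :
  obind (fun r => pmul r u) (obind (fun r => pmul r q) X) = obind (fun w => obind (pmul w) (pmul q u)) X.
Proof. by case: X => //= w; rewrite pmul_assoc. Qed.

Lemma I_mull x y : I y -> I (kq_mul x y).
Proof.
move=> [l [_ Hl]]; apply: I_eqkq (mul_eqkq (eqkq_refl x) Hl) _.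
apply: I_eqkq (mul_flatten_r _ _) _; rewrite -map_comp; apply: I_flat_map => c /=.
rewrite -/(gterm c) [x]kq_split; apply: I_eqkq (mul_flatten_l _ _) _.
rewrite -map_comp; apply: I_flat_map => -[k u] /=.
case: c => [[[k' p] j] q].
case E1: (pmul u p) => [r|].
- apply: (@I_eqkq _ (gterm (k * k', r, j, q))); last exact: I_gterm.
  apply: eqkq_pair => F; rewrite pair_mul pair1 !pair_gterm -mulrA; congr (_ * (_ * _)).
  apply: pair_ext => b; rewrite oappE obind_comm.
  by have := pmul_assoc u p b; rewrite E1 /= => ->.
- apply: (@I_eqkq _ [::]); last exact: I_nil.
  apply: eqkq_pair => F; rewrite pair_mul pair1 pair_gterm pair_nil.
  rewrite (@pair_ext (G j) _ (fun _ => 0)) ?pair0 ?mulr0 // => b.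
  rewrite oappE obind_comm.
  by have := pmul_assoc u p b; rewrite E1 /= => <-.
Qed.

Lemma I_mulr x y : I y -> I (kq_mul y x).
Proof.
move=> [l [_ Hl]]; apply: I_eqkq (mul_eqkq Hl (eqkq_refl x)) _.
apply: I_eqkq (mul_flatten_l _ _) _; rewrite -map_comp; apply: I_flat_map => c /=.
rewrite -/(gterm c) [x]kq_split; apply: I_eqkq (mul_flatten_r _ _) _.
rewrite -map_comp; apply: I_flat_map => -[k u] /=.
case: c => [[[k' p] j] q].
case E1: (pmul q u) => [r|].
- apply: (@I_eqkq _ (gterm (k' * k, p, j, r))); last exact: I_gterm.
  apply: eqkq_pair => F; rewrite pair_mul !pair_gterm -mulrA; congr (_ * _).
  rewrite -pairZ; apply: pair_ext => b.
  case: (pmul p b) => [z|] /=; last by rewrite mulr0.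
  have := pmul_assoc z q u; rewrite E1 /=.
  by case: (pmul z q) => [w|] /= <-; rewrite ?pair1 ?mulr0.
- apply: (@I_eqkq _ [::]); last exact: I_nil.
  apply: eqkq_pair => F; rewrite pair_mul pair_gterm pair_nil.
  rewrite (@pair_ext (G j) _ (fun _ => 0)) ?pair0 ?mulr0 // => b.
  case: (pmul p b) => [z|] //=.
  have := pmul_assoc z q u; rewrite E1 /=.
  by case: (pmul z q) => [w|] //= H; rewrite pair1 H mulr0.
Qed.

End KQ.

Local Close Scope ring_scope.

Local Open Scope ring_scope.

Section EQV.
Variables (V E : finType) (s t : E -> V) (K : fieldType).
Local Notation qp := (qpath s t).
Local Notation kq := (kq s t K).
Implicit Types (x y : kq) (p q : qp) (F : qp -> K).
Variables (m : nat) (G : 'I_m -> kq).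
Local Notation I := (I G).
Local Notation eqv := (eqv G).

Lemma pairB x F H : pair x (fun p => F p - H p) = pair x F - pair x H.
Proof.
by rewrite /pair -sumrB; apply: eq_bigr => c _; rewrite mulrBr.
Qed.

Lemma eqv_eqkq x y : eqkq x y -> eqv x y.
Proof.
move=> H; apply: (I_eqkq (y := [::])); last exact: I_nil.
apply: eqkq_pair => F; rewrite /kq_add pair_cat pair_opp pair_nil (pair_eqkq F H).
by rewrite subrr.
Qed.

Lemma eqv_refl x : eqv x x. Proof. exact: eqv_eqkq. Qed.

Lemma eqv_sym x y : eqv x y -> eqv y x.
Proof.
move=> H; apply: I_eqkq (I_opp H); apply: eqkq_pair => F.
by rewrite /kq_add pair_opp !pair_cat !pair_opp opprD opprK addrC.
Qed.

Lemma eqv_trans x y z : eqv x y -> eqv y z -> eqv x z.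
Proof.
move=> H1 H2; apply: I_eqkq (I_cat H1 H2); apply: eqkq_pair => F.
rewrite /kq_add !pair_cat !pair_opp.
by rewrite addrA -[pair x F - _ + _]addrA addNr addr0.
Qed.

Lemma eqv_add x x' y y' : eqv x x' -> eqv y y' -> eqv (x ++ y) (x' ++ y').
Proof.
move=> H1 H2; apply: I_eqkq (I_cat H1 H2); apply: eqkq_pair => F.
rewrite /kq_add !pair_cat !pair_opp !pair_cat opprD.
by rewrite !addrA; congr (_ + _); rewrite -!addrA; congr (_ + _); rewrite addrC.
Qed.

Lemma eqv_mul x x' y y' : eqv x x' -> eqv y y' -> eqv (kq_mul x y) (kq_mul x' y').
Proof.
move=> H1 H2; apply: I_eqkq (I_cat (I_mulr y H1) (I_mull x' H2)).
apply: eqkq_pair => F; rewrite /kq_add !pair_cat !pair_opp !pair_mul.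
under [X in _ = _ + X]pair_ext => a do rewrite pair_cat pair_opp.
by rewrite pairB pair_cat pair_opp addrA subrK.
Qed.

Lemma eqv_flatten (T : Type) (r : seq T) (f f' : T -> kq) :
  (forall i, eqv (f i) (f' i)) -> eqv (flatten (map f r)) (flatten (map f' r)).
Proof. by move=> H; elim: r => [|i r IH] /=; [exact: eqv_refl | apply: eqv_add]. Qed.

Lemma eqv_eqkq2 x x' y y' : eqkq x x' -> eqkq y y' -> eqv x' y' -> eqv x y.
Proof.
move=> H1 H2 H; apply: eqv_trans (eqv_eqkq H1) _; apply: eqv_trans H _.
by apply: eqv_eqkq; apply: eqkq_sym.
Qed.

Lemma mul_assoc x y z : eqkq (kq_mul (kq_mul x y) z) (kq_mul x (kq_mul y z)).
Proof.
apply: eqkq_pair => F; rewrite !pair_mul; apply: pair_ext => a.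
rewrite pair_mul; apply: pair_ext => b.
case E1: (pmul a b) => [r|] /=; last first.
  rewrite pair_zero // => c; rewrite oappE.
  by have := pmul_assoc a b c; rewrite E1 /= => <-.
apply: pair_ext => c; rewrite oappE.
by have := pmul_assoc a b c; rewrite E1 /= => ->.
Qed.

Lemma pair_ext_all (P : pred qp) x F H : all (fun c => P c.2) x ->
  (forall p, P p -> F p = H p) -> pair x F = pair x H.
Proof.
move=> Hx HF; elim: x Hx => [|c x IH] /=; first by rewrite !pair_nil.
by case/andP => H1 H2; rewrite !pair_cons HF // IH.
Qed.

Lemma all_mul (P Q R : pred qp) x y : all (fun c => P c.2) x -> all (fun c => Q c.2) y ->
  (forall a b r, P a -> Q b -> pmul a b = Some r -> R r) ->
  all (fun c => R c.2) (kq_mul x y).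
Proof.
move=> Hx Hy H; rewrite /kq_mul; elim: x Hx => [|a x IH] //= /andP [Ha Hx].
rewrite flatten_cat all_cat IH // andbT.
move: Hy; clear IH; elim: y => [|b y IHy] //= /andP [Hb Hy].
rewrite all_cat IHy // andbT.
by case E1: pmul => [r|] //=; rewrite andbT; apply: H E1.
Qed.

Lemma all_lift (P Q : pred qp) (phi : qp -> option qp) x : all (fun c => P c.2) x ->
  (forall a r, P a -> phi a = Some r -> Q r) -> all (fun c => Q c.2) (lift phi x).
Proof.
move=> Hx H; elim: x Hx => [|c x IH] //= /andP [Hc Hx].
rewrite /lift /=; case E1: (phi c.2) => [r|] /=; last exact: IH.
by rewrite (H _ _ Hc E1) IH.
Qed.

Lemma all_true (x : kq) : all (fun c => predT c.2) x.
Proof. by elim: x. Qed.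

End EQV.

Local Close Scope ring_scope.

Local Open Scope ring_scope.

Section Aux.
Variables (V E : finType) (s t : E -> V) (K : fieldType).
Local Notation qp := (qpath s t).
Local Notation kq := (kq s t K).
Implicit Types (x y : kq) (p q a b r : qp) (F : qp -> K) (phi : qp -> option qp) (z : kq) (L : seq kq).

Lemma pmul_someP a b r : pmul a b = Some r ->
  [/\ pend a = start b, start r = start a & arr r = arr a ++ arr b].
Proof. by case: pmulP => // r' H1 H2 H3 [<-]. Qed.
Lemma pmul_noneP a b : pmul a b = None -> pend a <> start b.
Proof. by case: pmulP. Qed.
Lemma pmul_pend a b r : pmul a b = Some r -> pend r = pend b.
Proof. by case/pmul_someP => H1 H2 H3; apply: pend_cat H1 H2 H3. Qed.

Lemma qp_valE p : (start p, arr p) = qp_val p.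
Proof. by case: p => [[]]. Qed.

Lemma lift_eqkq phi x x' : eqkq x x' -> eqkq (lift phi x) (lift phi x').
Proof. by move=> H; apply: eqkq_pair => F; rewrite !pair_lift; apply: pair_eqkq. Qed.

Lemma lift_flatten phi L : eqkq (lift phi (flatten L)) (flatten (map (lift phi) L)).
Proof.
apply: eqkq_pair => F; rewrite pair_lift !pair_flatten big_map.
by apply: eq_bigr => l _; rewrite pair_lift.
Qed.

Lemma lift_sub phi x y : eqkq (kq_add (lift phi x) (kq_opp (lift phi y)))
   (lift phi (kq_add x (kq_opp y))).
Proof.
by apply: eqkq_pair => F; rewrite /kq_add !(pair_cat, pair_opp, pair_lift).
Qed.

Lemma flatten_eqkq (T : Type) (r : seq T) (f f' : T -> kq) :
  (forall i, eqkq (f i) (f' i)) -> eqkq (flatten (map f r)) (flatten (map f' r)).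
Proof.
move=> H; apply: eqkq_pair => F; rewrite !pair_flatten !big_map.
by apply: eq_bigr => i _; apply: pair_eqkq.
Qed.

Lemma mul_cat_r x y z : eqkq (kq_mul x (y ++ z)) (kq_mul x y ++ kq_mul x z).
Proof.
apply: eqkq_pair => F; rewrite pair_cat !pair_mul -pairD.
by apply: pair_ext => a; rewrite pair_cat.
Qed.

Lemma mul_cat_l x y z : eqkq (kq_mul (y ++ z) x) (kq_mul y x ++ kq_mul z x).
Proof. by apply: eqkq_pair => F; rewrite pair_cat !pair_mul pair_cat. Qed.

Lemma all_flatten_map (P : pred qp) (T : Type) (r : seq T) (f : T -> kq) :
  (forall i, all (fun c => P c.2) (f i)) -> all (fun c => P c.2) (flatten (map f r)).
Proof. by move=> H; elim: r => [|i r IH] //=; rewrite all_cat H IH. Qed.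

Lemma sum_zs (zs : seq V) (u : V) (X : K) : uniq zs -> u \in zs ->
  \sum_(v <- zs) (if u == v then X else 0) = X.
Proof.
move=> U Hu; rewrite (bigD1_seq u) //= eqxx big1 ?addr0 // => v /negbTE.
by rewrite eq_sym => ->.
Qed.

End Aux.

Section Right.
Variables (V E : finType) (s t : E -> V) (K : fieldType).
Local Notation qp := (qpath s t).
Local Notation kq := (kq s t K).
Implicit Types (x y : kq) (p q a b r z : qp) (F : qp -> K).
Variables (m : nat) (G : 'I_m -> kq).
Local Notation I := (I G).
Local Notation eqv := (eqv G).
Variables (zs : seq V) (c : V -> qp) (ep : kq).
Hypotheses (Uzs : uniq zs) (Hc1 : forall w, start (c w) = w) (Hc2 : forall w, pend (c w) \in zs)
  (Hfact : forall r, pend r \in zs -> exists z, pmul (c (start r)) z = Some r)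
  (HG : forall j, all (fun cc => start cc.2 \in zs) (G j))
  (Hep : forall F, pair ep F = \sum_(v <- zs) F (ev s t v))
  (Hep_s : all (fun cc => start cc.2 \in zs) ep)
  (Hep_p : all (fun cc => pend cc.2 \in zs) ep).

Definition strip w r : option qp :=
  if (start r == w) && (take (size (arr (c w))) (arr r) == arr (c w))
  then insub (pend (c w), drop (size (arr (c w))) (arr r)) else None.

Lemma strip_prod w z r : pmul (c w) z = Some r -> strip w r = Some z.
Proof.
case/pmul_someP => H1 H2 H3; rewrite /strip H2 Hc1 eqxx H3 take_size_cat // eqxx.
by rewrite drop_size_cat // H1 qp_valE valK.
Qed.

Lemma strip_none w r : start r != w -> strip w r = None.
Proof. by rewrite /strip => /negbTE ->. Qed.

Lemma strip_some w r z : strip w r = Some z ->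
  [/\ start r = w, start z = pend (c w) & pend z = pend r].
Proof.
rewrite /strip; case: andP => // -[/eqP Hs /eqP Ht]; case: insubP => // u _ Hu [<-].
split => //; first by rewrite /start Hu.
have Hr : arr r = arr (c w) ++ drop (size (arr (c w))) (arr r).
  by rewrite -{1}(cat_take_drop (size (arr (c w))) (arr r)) Ht.
have Hsu : start u = pend (c w) by rewrite /start Hu.
have Hau : arr u = drop (size (arr (c w))) (arr r) by rewrite /arr Hu.
rewrite [pend u]pendE [pend r]pendE Hsu Hau {2}Hr map_cat last_cat Hs. 
by rewrite [pend (c w)]pendE Hc1.
Qed.

Lemma strip_mul w a b : start b \in zs ->
  obind (strip w) (pmul a b) = obind (fun a' => pmul a' b) (strip w a).
Proof.
move=> Hb; case E1: (pmul a b) => [r|] /=.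
- have [H1 H2 H3] := pmul_someP E1.
  case: (eqVneq (start a) w) => Hw; last by rewrite !strip_none // H2.
  have [z Hz] : exists z, pmul (c (start a)) z = Some a by apply: Hfact; rewrite H1.
  rewrite Hw in Hz.
  rewrite (strip_prod Hz) /=.
  have := pmul_assoc (c w) z b; rewrite Hz /= E1.
  by case: (pmul z b) => [zb|] //= /esym /strip_prod.
- case E2: (strip w a) => [z|] //=.
  have [_ _ Hz] := strip_some E2.
  case E3: (pmul z b) => [r|] //; have [H1 _ _] := pmul_someP E3.
  by case: (pmul_noneP E1); rewrite -Hz.
Qed.

Lemma strip_S1 w y1 y2 : all (fun cc => start cc.2 \in zs) y2 ->
  eqkq (lift (strip w) (kq_mul y1 y2)) (kq_mul (lift (strip w) y1) y2).
Proof.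
move=> Hy; apply: eqkq_pair => F; rewrite pair_lift !pair_mul pair_lift.
apply: pair_ext => a; case E2: (strip w a) => [a'|] /=.
- apply: (pair_ext_all (P := fun p => start p \in zs) Hy) => b Hb.
  by rewrite oappE strip_mul // E2.
- transitivity (pair y2 (fun _ => 0)); last exact: pair0.
  apply: (pair_ext_all (P := fun p => start p \in zs) Hy) => b Hb.
  by rewrite oappE strip_mul // E2.
Qed.

Lemma all_s_mul y1 y2 : all (fun cc => start cc.2 \in zs) y1 ->
  all (fun cc => start cc.2 \in zs) (kq_mul y1 y2).
Proof.
move=> H; apply: (all_mul (P := fun p => start p \in zs) (Q := predT)
  (R := fun p => start p \in zs) H (all_true y2)) => a b r Ha _ /pmul_someP [_ -> _] //.
Qed.

Lemma all_p_mul y1 y2 : all (fun cc => pend cc.2 \in zs) y2 ->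
  all (fun cc => pend cc.2 \in zs) (kq_mul y1 y2).
Proof.
move=> H; apply: (all_mul (P := predT) (Q := fun p => pend p \in zs)
  (R := fun p => pend p \in zs) (all_true y1) H) => a b r _ Hb /pmul_pend -> //.
Qed.

Lemma strip_I w y : I y -> I (lift (strip w) y).
Proof.
move=> [l [_ Hl]]; apply: I_eqkq (lift_eqkq _ Hl) _.
apply: I_eqkq (lift_flatten _ _) _; rewrite -map_comp; apply: I_flat_map => -[[[k p] j] q] /=.
have HGq : all (fun cc => start cc.2 \in zs) (kq_mul (G j) (kq_path K q)) by apply: all_s_mul.
apply: I_eqkq (lift_eqkq _ (mul_assoc _ _ _)) _.
apply: I_eqkq (strip_S1 _ _ HGq) _.
rewrite /lift /=; case: (strip w p) => [p'|] /=; last exact: I_nil.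
apply: I_eqkq (eqkq_sym (mul_assoc _ _ _)) _.
exact: (I_gterm G (k, p', j, q)).
Qed.

Lemma strip_eqv w y y' : eqv y y' -> eqv (lift (strip w) y) (lift (strip w) y').
Proof. by move=> H; apply: I_eqkq (lift_sub _ _ _) _; apply: strip_I. Qed.

Lemma ep_l y : all (fun cc => start cc.2 \in zs) y -> eqkq (kq_mul ep y) y.
Proof.
move=> Hy; apply: eqkq_pair => F; rewrite pair_mul Hep.
under eq_bigr => v _ do under pair_ext => b do rewrite pmul_ev_l.
rewrite -pair_sum; apply: (pair_ext_all (P := fun p => start p \in zs) Hy) => b Hb.
rewrite -(sum_zs (F b) Uzs Hb); apply: eq_bigr => v _.
by case: eqP.
Qed.

Lemma ep_r y : all (fun cc => pend cc.2 \in zs) y -> eqkq (kq_mul y ep) y.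
Proof.
move=> Hy; apply: eqkq_pair => F; rewrite pair_mul.
apply: (pair_ext_all (P := fun p => pend p \in zs) Hy) => b Hb; rewrite Hep.
rewrite -(sum_zs (F b) Uzs Hb); apply: eq_bigr => v _.
by rewrite pmul_ev_r; case: eqP.
Qed.

Lemma inB_of y : all (fun cc => start cc.2 \in zs) y -> all (fun cc => pend cc.2 \in zs) y ->
  eqv y (kq_mul ep (kq_mul y ep)).
Proof.
move=> H1 H2; apply: eqv_eqkq; apply: eqkq_sym.
apply: eqkq_trans (mul_eqkq (eqkq_refl ep) (ep_r H2)) _; exact: ep_l.
Qed.

Let n := #|V|.
Definition fR x (i : 'I_n) : kq := lift (strip (enum_val i)) (kq_mul x ep).
Definition hR (u : 'I_n -> kq) : kq :=
  flatten [seq kq_mul (kq_path K (c (enum_val i))) (u i) | i <- enum 'I_n].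

Lemma all_lift_s w y : all (fun cc => start cc.2 \in zs) (lift (strip w) y).
Proof.
apply: (all_lift (P := predT) (Q := fun p => start p \in zs) (all_true y)).
by move=> a r _ /strip_some [_ -> _].
Qed.
Lemma all_lift_p w y : all (fun cc => pend cc.2 \in zs) y ->
  all (fun cc => pend cc.2 \in zs) (lift (strip w) y).
Proof.
move=> H; apply: (all_lift (P := fun p => pend p \in zs) (Q := fun p => pend p \in zs) H).
by move=> a r Ha /strip_some [_ _ ->].
Qed.

Theorem right_gen : right_projective eqv (@kq_add _ _ _ _ K) (@kq_mul _ _ _ _ K)
  (fun x => eqv x (kq_mul ep (kq_mul x ep))) (fun x => eqv x (kq_mul x ep)).
Proof.
exists n, fR, hR; split; [|split; [|split; [|split; [|split; [|split; [|split; [|split]]]]]]].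
- move=> x _ i; apply: inB_of; first exact: all_lift_s.
  by apply: all_lift_p; apply: all_p_mul.
- move=> x y _ _ H i; apply: strip_eqv; exact: eqv_mul H (eqv_refl _ _).
- move=> x y _ _ i; apply: eqv_eqkq; rewrite /fR /kq_add.
  apply: eqkq_trans (lift_eqkq _ (mul_cat_l _ _ _)) _.
  by apply: eqkq_pair => F; rewrite !pair_cat !pair_lift pair_cat.
- move=> x b Hx Hb i; rewrite /fR.
  set b' := kq_mul ep (kq_mul b ep).
  have Hb's : all (fun cc => start cc.2 \in zs) b' by apply: all_s_mul.
  have Hb'p : all (fun cc => pend cc.2 \in zs) b' by apply: all_p_mul; apply: all_p_mul.
  have HA : eqv (kq_mul (kq_mul x b) ep) (kq_mul (kq_mul x ep) b').
    apply: eqv_trans (eqv_mul (eqv_mul Hx Hb) (eqv_refl _ ep)) _.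
    apply: eqv_eqkq; apply: eqkq_trans (mul_assoc _ _ _) _.
    exact: mul_eqkq (eqkq_refl _) (ep_r Hb'p).
  apply: eqv_trans (strip_eqv _ HA) _.
  apply: eqv_trans (eqv_eqkq _ (strip_S1 _ _ Hb's)) _.
  exact: eqv_mul (eqv_refl _ _) (eqv_sym Hb).
- move=> u Hu.
  set u' := fun i => kq_mul ep (kq_mul (u i) ep).
  have H1 : eqv (hR u) (hR u').
    by apply: eqv_flatten => i; exact: eqv_mul (eqv_refl _ _) (Hu i).
  have H2 : all (fun cc => pend cc.2 \in zs) (hR u').
    apply: (all_flatten_map (P := fun p => pend p \in zs)) => i.
    by apply: all_p_mul; apply: all_p_mul; apply: all_p_mul.
  have H3 := eqv_sym H1; apply: eqv_trans H1 _; apply: eqv_trans (eqv_eqkq _ (eqkq_sym (ep_r H2))) _.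
  exact: eqv_mul H3 (eqv_refl _ _).
- move=> u v _ _ H; apply: eqv_flatten => i; exact: eqv_mul (eqv_refl _ _) (H i).
- move=> u v _ _; apply: eqv_eqkq; rewrite /hR /kq_add.
  apply: eqkq_trans (flatten_eqkq _ (fun i => mul_cat_r _ _ _)) _.
  by apply: eqkq_pair => F; rewrite pair_cat !pair_flatten !big_map -big_split /=;
    apply: eq_bigr => i _; rewrite pair_cat.
- move=> u b _ _; apply: eqv_eqkq; rewrite /hR.
  apply: eqkq_trans (flatten_eqkq _ (fun i => eqkq_sym (mul_assoc _ _ _))) _.
  apply: eqkq_sym; apply: eqkq_trans (mul_flatten_l _ _) _; rewrite -map_comp.
  exact: eqkq_refl.
- move=> x Hx; apply: eqv_trans _ (eqv_sym Hx); apply: eqv_eqkq.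
  apply: eqkq_pair => F; rewrite /hR pair_flatten big_map.
  under eq_bigr => i _ do rewrite pair_mul pair_path /fR pair_lift.
  rewrite -pair_sum.
  apply: (pair_ext_all (P := fun p => pend p \in zs) (all_p_mul x Hep_p)) => r Hr.
  rewrite big_enum /=.
  rewrite -(big_enum_val (fun w => oapp (fun b => oapp F 0 (pmul (c w) b)) 0 (strip w r))) /=.
  have [z Hz] := Hfact Hr.
  rewrite (bigD1 (start r)) //= (strip_prod Hz) /= Hz /= big1 ?addr0 // => w Hw.
  by rewrite strip_none // eq_sym.
Qed.

Variables (d : V -> qp).
Hypotheses (Hd1 : forall w, pend (d w) = w) (Hd2 : forall w, start (d w) \in zs)
  (HfactL : forall r, start r \in zs -> exists z, pmul z (d (pend r)) = Some r)
  (HGL : forall j, all (fun cc => pend cc.2 \in zs) (G j)).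

Definition stripL w r : option qp :=
  if (pend r == w) && (drop (size (arr r) - size (arr (d w))) (arr r) == arr (d w))
  then insub (start r, take (size (arr r) - size (arr (d w))) (arr r)) else None.

Lemma stripL_prod w z r : pmul z (d w) = Some r -> stripL w r = Some z.
Proof.
move=> E1; have [H1 H2 H3] := pmul_someP E1.
rewrite /stripL (pmul_pend E1) Hd1 eqxx H3 size_cat addnK drop_size_cat // eqxx.
by rewrite take_size_cat // H2 qp_valE valK.
Qed.

Lemma stripL_none w r : pend r != w -> stripL w r = None.
Proof. by rewrite /stripL => /negbTE ->. Qed.

Lemma last_split p q l1 : arr p = l1 ++ arr q -> pend p = pend q ->
  last (start p) (map t l1) = start q.
Proof.
move=> H1 H2; case Eq: (arr q) => [|a l2].
  move: H2; rewrite !pendE H1 Eq cats0 /= => ->; by [].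
have Wp := qpath_walk p; have Wq := qpath_walk q.
rewrite H1 Eq walk_cat /= in Wp; rewrite Eq /= in Wq.
case/andP: Wp => _ /andP [/eqP <- _]; by case/andP: Wq => /eqP.
Qed.

Lemma stripL_some w r z : stripL w r = Some z ->
  [/\ pend r = w, pend z = start (d w) & start z = start r].
Proof.
rewrite /stripL; case: andP => // -[/eqP Hs /eqP Ht]; case: insubP => // u _ Hu [<-].
split => //; last by rewrite /start Hu.
have Hr : arr r = take (size (arr r) - size (arr (d w))) (arr r) ++ arr (d w).
  by rewrite -{2}Ht cat_take_drop.
have -> : pend u = last (start r) (map t (take (size (arr r) - size (arr (d w))) (arr r))).
  by rewrite pendE /start /arr Hu.
by apply: last_split Hr _; rewrite Hs Hd1.
Qed.

Lemma stripL_mul w a b : pend b \in zs ->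
  obind (stripL w) (pmul b a) = obind (fun a' => pmul b a') (stripL w a).
Proof.
move=> Hb; case E1: (pmul b a) => [r|] /=.
- have [H1 H2 H3] := pmul_someP E1.
  case: (eqVneq (pend a) w) => Hw; last by rewrite !stripL_none // (pmul_pend E1).
  have [z Hz] : exists z, pmul z (d (pend a)) = Some a by apply: HfactL; rewrite -H1.
  rewrite Hw in Hz; rewrite (stripL_prod Hz) /=.
  have := pmul_assoc b z (d w); rewrite Hz /= E1.
  by case: (pmul b z) => [bz|] //= /stripL_prod.
- case E2: (stripL w a) => [z|] //=.
  have [_ _ Hz] := stripL_some E2.
  case E3: (pmul b z) => [r|] //; have [H1 _ _] := pmul_someP E3.
  by case: (pmul_noneP E1); rewrite -Hz.
Qed.

Lemma stripL_S1 w y1 y2 : all (fun cc => pend cc.2 \in zs) y1 ->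
  eqkq (lift (stripL w) (kq_mul y1 y2)) (kq_mul y1 (lift (stripL w) y2)).
Proof.
move=> Hy; apply: eqkq_pair => F; rewrite pair_lift !pair_mul.
apply: (pair_ext_all (P := fun p => pend p \in zs) Hy) => b Hb.
rewrite pair_lift; apply: pair_ext => a; rewrite oappE stripL_mul //.
by case: (stripL w a).
Qed.

Lemma mul_nil_r y : eqkq (kq_mul y [::]) [::].
Proof. by apply: eqkq_pair => F; rewrite pair_mul pair_nil pair_zero // => a; rewrite pair_nil. Qed.

Lemma stripL_I w y : I y -> I (lift (stripL w) y).
Proof.
move=> [l [_ Hl]]; apply: I_eqkq (lift_eqkq _ Hl) _.
apply: I_eqkq (lift_flatten _ _) _; rewrite -map_comp; apply: I_flat_map => -[[[k p] j] q] /=.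
have HGq : all (fun cc => pend cc.2 \in zs) (kq_mul [:: (k, p)] (G j)) by apply: all_p_mul.
apply: I_eqkq (stripL_S1 _ _ HGq) _.
rewrite /lift /kq_path /=; case: (stripL w q) => [q'|] /=.
  exact: (I_gterm G (k, p, j, q')).
apply: I_eqkq (mul_nil_r _) _; exact: I_nil.
Qed.

Lemma stripL_eqv w y y' : eqv y y' -> eqv (lift (stripL w) y) (lift (stripL w) y').
Proof. by move=> H; apply: I_eqkq (lift_sub _ _ _) _; apply: stripL_I. Qed.

Definition fL x (i : 'I_n) : kq := lift (stripL (enum_val i)) (kq_mul ep x).
Definition hL (u : 'I_n -> kq) : kq :=
  flatten [seq kq_mul (u i) (kq_path K (d (enum_val i))) | i <- enum 'I_n].

Lemma all_liftL_p w y : all (fun cc => pend cc.2 \in zs) (lift (stripL w) y).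
Proof.
apply: (all_lift (P := predT) (Q := fun p => pend p \in zs) (all_true y)).
by move=> a r _ /stripL_some [_ -> _].
Qed.
Lemma all_liftL_s w y : all (fun cc => start cc.2 \in zs) y ->
  all (fun cc => start cc.2 \in zs) (lift (stripL w) y).
Proof.
move=> H; apply: (all_lift (P := fun p => start p \in zs) (Q := fun p => start p \in zs) H).
by move=> a r Ha /stripL_some [_ _ ->].
Qed.

Theorem left_gen : left_projective eqv (@kq_add _ _ _ _ K) (@kq_mul _ _ _ _ K)
  (fun x => eqv x (kq_mul ep (kq_mul x ep))) (fun x => eqv x (kq_mul ep x)).
Proof.
exists n, fL, hL; split; [|split; [|split; [|split; [|split; [|split; [|split; [|split]]]]]]].
- move=> x _ i; apply: inB_of; last exact: all_liftL_p.
  by apply: all_liftL_s; apply: all_s_mul.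
- move=> x y _ _ H i; apply: stripL_eqv; exact: eqv_mul (eqv_refl _ _) H.
- move=> x y _ _ i; apply: eqv_eqkq; rewrite /fL /kq_add.
  apply: eqkq_trans (lift_eqkq _ (mul_cat_r _ _ _)) _.
  by apply: eqkq_pair => F; rewrite !pair_cat !pair_lift pair_cat.
- move=> x b Hx Hb i; rewrite /fL.
  set b' := kq_mul ep (kq_mul b ep).
  have Hb's : all (fun cc => start cc.2 \in zs) b' by apply: all_s_mul.
  have Hb'p : all (fun cc => pend cc.2 \in zs) b' by apply: all_p_mul; apply: all_p_mul.
  have HA : eqv (kq_mul ep (kq_mul b x)) (kq_mul b' (kq_mul ep x)).
    apply: eqv_trans (eqv_mul (eqv_refl _ ep) (eqv_mul Hb Hx)) _.
    apply: eqv_eqkq; apply: eqkq_trans (eqkq_sym (mul_assoc _ _ _)) _.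
    exact: mul_eqkq (ep_l Hb's) (eqkq_refl _).
  apply: eqv_trans (stripL_eqv _ HA) _.
  apply: eqv_trans (eqv_eqkq _ (stripL_S1 _ _ Hb'p)) _.
  exact: eqv_mul (eqv_sym Hb) (eqv_refl _ _).
- move=> u Hu.
  set u' := fun i => kq_mul ep (kq_mul (u i) ep).
  have H1 : eqv (hL u) (hL u').
    by apply: eqv_flatten => i; exact: eqv_mul (Hu i) (eqv_refl _ _).
  have H2 : all (fun cc => start cc.2 \in zs) (hL u').
    apply: (all_flatten_map (P := fun p => start p \in zs)) => i.
    by apply: all_s_mul; apply: all_s_mul.
  have H3 := eqv_sym H1.
  apply: eqv_trans H1 _; apply: eqv_trans (eqv_eqkq _ (eqkq_sym (ep_l H2))) _.
  exact: eqv_mul (eqv_refl _ _) H3.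
- move=> u v _ _ H; apply: eqv_flatten => i; exact: eqv_mul (H i) (eqv_refl _ _).
- move=> u v _ _; apply: eqv_eqkq; rewrite /hL /kq_add.
  apply: eqkq_trans (flatten_eqkq _ (fun i => mul_cat_l _ _ _)) _.
  by apply: eqkq_pair => F; rewrite pair_cat !pair_flatten !big_map -big_split /=;
    apply: eq_bigr => i _; rewrite pair_cat.
- move=> u b _ _; apply: eqv_eqkq; rewrite /hL.
  apply: eqkq_trans (flatten_eqkq _ (fun i => mul_assoc _ _ _)) _.
  apply: eqkq_sym; apply: eqkq_trans (mul_flatten_r _ _) _; rewrite -map_comp.
  exact: eqkq_refl.
- move=> x Hx; apply: eqv_trans _ (eqv_sym Hx); apply: eqv_eqkq.
  apply: eqkq_pair => F; rewrite /hL pair_flatten big_map.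
  under eq_bigr => i _ do rewrite pair_mul /fL pair_lift.
  rewrite -pair_sum.
  apply: (pair_ext_all (P := fun p => start p \in zs) (all_s_mul x Hep_s)) => r Hr.
  rewrite big_enum /=.
  rewrite -(big_enum_val (fun w => oapp (fun a0 => pair (kq_path K (d w))
     (fun b => oapp F 0 (pmul a0 b))) 0 (stripL w r))) /=.
  have [z Hz] := HfactL Hr.
  rewrite (bigD1 (pend r)) //= (stripL_prod Hz) /= pair_path Hz /= big1 ?addr0 // => w Hw.
  by rewrite stripL_none // eq_sym.
Qed.

End Right.

Local Close Scope ring_scope.

Section Stretch.
Variables (V E : finType) (s t : E -> V) (B : nat).
Local Notation SV := (sV V E B.+1).
Local Notation SE := (sE E B.+1).
Local Notation sS := (@ss V E s B.+1).
Local Notation sT := (@st V E t B.+1).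

Definition pos (al : E) (k : nat) : SV :=
  if k is k'.+1 then
    (if insub k' : option 'I_B is Some j then inr (al, j) else inl (t al))
  else inl (s al).

Lemma ssE (a : SE) : sS a = pos a.1 a.2.
Proof.
case: a => al i; rewrite /ss /=; case: unliftP => [j ->|->] //.
by rewrite lift0 /= insubT //= => Hj; congr (inr (_, _)); apply: val_inj.
Qed.

Lemma stE (a : SE) : sT a = pos a.1 (a.2).+1.
Proof.
case: a => al i; rewrite /st /=; case: unliftP => [j ->|->] /=.
  rewrite /bump /= leqNgt ltn_ord /= add0n insubT //= => Hj.
  by congr (inr (_, _)); apply: val_inj.
by rewrite insubF // ltnn.
Qed.

Lemma pos_inr (al : E) (k : nat) : 0 < k <= B ->
  exists j : 'I_B, pos al k = inr (al, j) /\ val j = k.-1.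
Proof.
case: k => // k /= Hk; have Hk' : k < B by [].
by rewrite insubT; exists (Sub k Hk').
Qed.

Lemma pos_inj (be al : E) i k : 0 < k <= B -> pos be i = pos al k -> be = al /\ i = k.
Proof.
move=> Hk; have [j [-> Hj]] := pos_inr al Hk.
case: i => [|i] //=; case: insubP => // j' _ Hj' [<- Ej]; split => //.
by case: k Hk Hj => // k _ /= <-; rewrite -Hj' Ej.
Qed.

Lemma pos_inl (al : E) k v : 0 < k <= B -> pos al k <> inl v.
Proof. by move=> Hk; have [j [-> _]] := pos_inr al Hk. Qed.

Lemma pos_max (al : E) : pos al B.+1 = inl (t al).
Proof. by rewrite /= insubF // ltnn. Qed.

Definition pre (al : E) (k : nat) : seq SE := [seq (al, inord i) | i <- iota k (B.+1 - k)].
Definition suf (al : E) (k : nat) : seq SE := [seq (al, inord i) | i <- iota 0 k].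

Lemma pre_walk (al : E) k : k <= B.+1 ->
  walk sS sT (pos al k) (pre al k) /\ last (pos al k) (map sT (pre al k)) = pos al B.+1.
Proof.
move Ed: (B.+1 - k) => d; elim: d k Ed => [|d IH] k Ed Hk.
  have -> : k = B.+1 by lia.
  by rewrite /pre subnn.
have HkB : k <= B by lia.
have Ed' : B.+1 - k.+1 = d by lia.
rewrite /pre Ed /= -Ed' -/(pre al k.+1).
have [IH1 IH2] := IH k.+1 Ed' HkB.
by rewrite ssE stE /= inordK // eqxx IH1 IH2.
Qed.

Lemma suf_walk (al : E) k : k <= B.+1 ->
  walk sS sT (pos al 0) (suf al k) /\ last (pos al 0) (map sT (suf al k)) = pos al k.
Proof.
elim: k => [|k IH] Hk; first by [].
have [IH1 IH2] := IH (ltnW Hk).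
rewrite /suf.
have -> : iota 0 k.+1 = rcons (iota 0 k) k by rewrite -cats1 -addn1 iotaD.
rewrite map_rcons -/(suf al k) walk_rcons map_rcons last_rcons.
by rewrite IH1 ssE stE /= inordK // IH2 eqxx.
Qed.

Lemma pre_fact (al : E) k l : 0 < k <= B.+1 -> walk sS sT (pos al k) l ->
  (exists v, last (pos al k) (map sT l) = inl v) ->
  l = pre al k ++ drop (B.+1 - k) l.
Proof.
move Ed: (B.+1 - k) => d; elim: d k l Ed => [|d IH] k l Ed /andP [Hk0 Hk] Hw Hl.
  have -> : k = B.+1 by lia.
  by rewrite /pre subnn drop0.
have HkB : k <= B by lia.
have Ed' : B.+1 - k.+1 = d by lia.
case: l Hw Hl => [|a l] /=.
  move=> _ [v Hv]; have Hk' : 0 < k <= B by rewrite Hk0 HkB.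
  by case: (pos_inl Hk' Hv).
case/andP => /eqP Ha Hw Hl.
have Hk' : 0 < k <= B by rewrite Hk0 HkB.
rewrite ssE in Ha; have [H1 H2] := pos_inj Hk' Ha.
have -> : a = (al, inord k).
  by case: a H1 H2 {Ha Hw Hl} => b i /= -> Hi; congr (_, _); apply: val_inj; rewrite /= inordK // -Hi.
rewrite /pre Ed /=; congr (_ :: _).
have := IH k.+1 l Ed'; rewrite /pre Ed'; apply => //.
- by move: Hw; rewrite stE H2 H1.
- by move: Hl; rewrite stE H2 H1.
Qed.

End Stretch.

Section Stretch2.
Variables (V E : finType) (s t : E -> V) (B : nat).
Local Notation SV := (sV V E B.+1).
Local Notation SE := (sE E B.+1).
Local Notation sS := (@ss V E s B.+1).
Local Notation sT := (@st V E t B.+1).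
Local Notation qp := (qpath sS sT).
Local Notation Pos := (pos s t B).
Local Notation Pre := (pre B).
Local Notation Suf := (suf B).

Lemma suf_fact al k l v0 : 0 < k <= B -> walk sS sT (inl v0) l ->
  last (inl v0) (map sT l) = Pos al k -> exists l0, l = l0 ++ Suf al k.
Proof.
elim: k l => [|k IH] l // Hk.
case/lastP: l => [|l a] /=.
  by move=> _ Hv; case: (pos_inl Hk (esym Hv)).
rewrite walk_rcons map_rcons last_rcons => /andP [Hw /eqP Ha] Hl.
rewrite (stE s) in Hl; have [H1 H2] := pos_inj Hk Hl.
have Ea : a = (al, inord k).
  case: a H1 H2 {Ha Hl} => b i /= -> [Hi]; congr (_, _); apply: val_inj.
  by rewrite /= inordK // -Hi.
have Hsuf : Suf al k.+1 = rcons (Suf al k) (al, inord k).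
  have Hi : iota 0 k.+1 = rcons (iota 0 k) k by rewrite -cats1 -addn1 iotaD.
  by rewrite /suf Hi map_rcons.
rewrite Hsuf Ea.
case: k IH Hk Hsuf Ea Hl H1 H2 => [|k] IH Hk Hsuf Ea Hl H1 H2.
  by exists l; rewrite /suf /= cats1.
have Hk' : 0 < k.+1 <= B by lia.
have [l0 ->] : exists l0, l = l0 ++ Suf al k.+1.
  apply: IH Hk' Hw _; rewrite -Ha Ea (ssE s t) /= inordK //; lia.
by exists l0; rewrite rcons_cat.
Qed.

Definition isl (w : SV) : bool := if w is inl _ then true else false.
Definition zs : seq SV := map inl (enum V).

Lemma inzs w : (w \in zs) = isl w.
Proof.
case: w => [v|x] /=; first by rewrite mem_map ?mem_enum //; move=> ?? [].
by apply/mapP => -[].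
Qed.

Lemma Uzs : uniq zs.
Proof. by rewrite map_inj_uniq ?enum_uniq // => ?? []. Qed.

Lemma inr_pos (al : E) (j : 'I_B) : inr (al, j) = Pos al j.+1 :> SV.
Proof. by rewrite /= insubT //= => Hj; congr (inr (_, _)); apply: val_inj. Qed.

Definition cpre (w : SV) : seq SE := if w is inr (al, j) then Pre al j.+1 else [::].
Definition cR (w : SV) : qp := insubd (ev sS sT w) (w, cpre w).

Lemma cR_val w : qp_val (cR w) = (w, cpre w).
Proof.
rewrite /cR val_insubd valid_walk; case: w => [v|[al j]] //=.
by rewrite inr_pos (proj1 (pre_walk s t al (k := j.+1) (ltnW (ltn_ord j)))).
Qed.

Lemma pmul_of (p q r : qp) : pend p = start q -> start r = start p ->
  arr r = arr p ++ arr q -> pmul p q = Some r.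
Proof.
move=> H1 H2 H3; case: pmulP => [r' H4 H5 H6|H4]; last by case: H4.
by congr Some; apply: qpath_eq; [rewrite H5 H2 | rewrite H6 H3].
Qed.

Lemma cR_start w : start (cR w) = w. Proof. by rewrite /start cR_val. Qed.
Lemma cR_pend w : pend (cR w) \in zs.
Proof.
rewrite pendE /start /arr cR_val /= inzs; case: w => [v|[al j]] //=.
by rewrite inr_pos (proj2 (pre_walk s t al (k := j.+1) (ltnW (ltn_ord j)))) pos_max.
Qed.

Lemma cR_fact (r : qp) : pend r \in zs -> exists z, pmul (cR (start r)) z = Some r.
Proof.
rewrite inzs; move Ew: (start r) => w Hr.
have Wr := qpath_walk r; rewrite Ew in Wr.
case: w Ew Wr => [v|[al j]] Ew Wr.
  exists r; apply: pmul_of; first by rewrite pendE cR_start [arr _]/arr cR_val /= Ew.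
    by rewrite cR_start Ew.
  by rewrite [arr (cR _)]/arr cR_val.
have Hj : 0 < j.+1 <= B.+1 by rewrite /= ltnS ltnW.
have Hf := pre_fact (s := s) (t := t) (al := al) Hj (l := arr r).
rewrite -inr_pos in Hf; have {}Hf := Hf Wr.
have Hl : exists v, last (inr (al, j)) [seq sT i | i <- arr r] = inl v.
  by move: Hr; rewrite pendE Ew; case: last => // v _; exists v.
have {}Hf := Hf Hl.
set rest := drop (B.+1 - j.+1) (arr r) in Hf.
have Hv : valid sS sT (inl (t al), rest).
  move: Wr; rewrite Hf walk_cat => /andP [_]; rewrite valid_walk.
  by rewrite inr_pos (proj2 (pre_walk s t al (k := j.+1) (ltnW (ltn_ord j)))) pos_max.
exists (QPath Hv); apply: pmul_of.
- by rewrite pendE /start /arr cR_val /= inr_pos (proj2 (pre_walk s t al (k := j.+1) (ltnW (ltn_ord j)))) pos_max.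
- by rewrite Ew cR_start.
- by rewrite /arr cR_val /=; exact: Hf.
Qed.

End Stretch2.

Section Stretch3.
Variables (V E : finType) (s t : E -> V) (B : nat).
Local Notation SV := (sV V E B.+1).
Local Notation SE := (sE E B.+1).
Local Notation sS := (@ss V E s B.+1).
Local Notation sT := (@st V E t B.+1).
Local Notation qp := (qpath sS sT).
Local Notation Pos := (pos s t B).
Local Notation Pre := (pre B).
Local Notation Suf := (suf B).
Local Notation zs := (zs V E B).

Definition dstart (w : SV) : SV := if w is inr (al, j) then inl (s al) else w.
Definition csuf (w : SV) : seq SE := if w is inr (al, j) then Suf al j.+1 else [::].
Definition dL (w : SV) : qp := insubd (ev sS sT w) (dstart w, csuf w).

Lemma dL_val w : qp_val (dL w) = (dstart w, csuf w).
Proof.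
rewrite /dL val_insubd valid_walk; case: w => [v|[al j]] //.
by rewrite /dstart /csuf (proj1 (suf_walk s t (B := B) al (k := j.+1) (ltnW (ltn_ord j)))).
Qed.

Lemma dL_pend w : pend (dL w) = w.
Proof.
rewrite pendE /start /arr dL_val; case: w => [v|[al j]] //.
transitivity (Pos al j.+1).
  exact: (proj2 (suf_walk s t (B := B) al (k := j.+1) (ltnW (ltn_ord j)))).
exact: (esym (@inr_pos _ _ s t B al j)).
Qed.

Lemma dL_start w : start (dL w) \in zs.
Proof. by rewrite /start dL_val inzs; case: w => [v|[al j]]. Qed.

Lemma dL_fact (r : qp) : start r \in zs -> exists z, pmul z (dL (pend r)) = Some r.
Proof.
rewrite inzs; move Ew: (pend r) => w Hr.
have Wr := qpath_walk r.
case: w Ew => [v|[al j]] Ew.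
  exists r; apply: pmul_of; first by rewrite Ew /start dL_val.
    by [].
  by rewrite [arr (dL _)]/arr dL_val cats0.
case Es: (start r) Hr Wr => [v0|] // _ Wr.
have Hj : 0 < j.+1 <= B by rewrite /= ltn_ord.
have [l0 Hl0] : exists l0, arr r = l0 ++ Suf al j.+1.
  apply: suf_fact Hj Wr _; by rewrite -Es -pendE Ew (inr_pos s t).
have Hv : valid sS sT (start r, l0).
  by move: Wr; rewrite -Es Hl0 walk_cat valid_walk => /andP [].
exists (QPath Hv); apply: pmul_of => //.
- rewrite [start (dL _)]/start dL_val /= pendE /start /arr /=.
  move: Wr; rewrite -Es Hl0 walk_cat => /andP [_].
  rewrite /suf /= => /andP [/eqP <- _].
  by rewrite (ssE s t) /= inordK.
- by rewrite [arr (dL _)]/arr dL_val Hl0.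
Qed.

Lemma theta_some (p : qpath s t) (q : qp) : theta_path B.+1 p = Some q ->
  start q = inl (start p) /\
  arr q = flatten [seq [seq (a, j) | j <- enum 'I_B.+1] | a <- arr p].
Proof. by rewrite /theta_path; case: insubP => // u _ Hu [<-]; rewrite /start /arr Hu. Qed.

Lemma last_blocks (l : seq E) v0 : exists v,
  last (inl v0 : SV) (map sT (flatten [seq [seq (a, j) | j <- enum 'I_B.+1] | a <- l]))
  = inl v.
Proof.
elim: l v0 => [|a l IH] v0 /=; first by exists v0.
rewrite map_cat last_cat.
have -> : last (inl v0 : SV) (map sT [seq (a, j) | j <- enum 'I_B.+1]) = inl (t a).
  by rewrite enum_ordSr map_rcons map_rcons last_rcons (stE s t) pos_max.
exact: IH.
Qed.

Lemma all_theta (K : fieldType) (P : pred qp) (x : kq s t K) :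
  (forall p q, theta_path B.+1 p = Some q -> P q) ->
  all (fun cc => P cc.2) (theta B.+1 x).
Proof.
move=> H; elim: x => [|c x IH] //=.
rewrite /theta /=; case E1: theta_path => [q|] //=.
by rewrite (H _ _ E1) IH.
Qed.

Lemma HG (K : fieldType) (x : kq s t K) : all (fun cc => start cc.2 \in zs) (theta B.+1 x).
Proof. by apply: (all_theta (P := fun q => start q \in zs)) => p q /theta_some [-> _]; rewrite inzs. Qed.

Lemma HGL (K : fieldType) (x : kq s t K) : all (fun cc => pend cc.2 \in zs) (theta B.+1 x).
Proof.
apply: (all_theta (P := fun q => pend q \in zs)) => p q /theta_some [H1 H2]; rewrite inzs pendE H1 H2.
by have [v ->] := last_blocks (arr p) (start p).
Qed.

Lemma Hep (K : fieldType) F : pair (eps s t B.+1 K) F = (\sum_(v <- zs) F (ev sS sT v))%R.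
Proof. by rewrite /eps /pair /zs !big_map; apply: eq_bigr => v _; rewrite GRing.mul1r. Qed.

Lemma Hep_s (K : fieldType) : all (fun cc => start cc.2 \in zs) (eps s t B.+1 K).
Proof. by rewrite /eps all_map; apply/allP => v _ /=; rewrite inzs. Qed.
Lemma Hep_p (K : fieldType) : all (fun cc => pend cc.2 \in zs) (eps s t B.+1 K).
Proof. by rewrite /eps all_map; apply/allP => v _ /=; rewrite inzs. Qed.

End Stretch3.

Unset Implicit Arguments.
Theorem theorem1p13 (K : fieldType) (V E : finType) (s t : E -> V)
    (m : nat) (g : 'I_m -> kq s t K) (A : nat) :
  admissible g -> (forall j, uniform (g j)) -> minimal_gens g -> 0 < A ->
  let gt := fun j => theta A (g j) in
  let eqvt := eqv gt in
  let ep := @eps _ _ s t A K in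
  let inB := fun x => eqvt x (kq_mul ep (kq_mul x ep)) in
  right_projective eqvt (@kq_add _ _ _ _ K) (@kq_mul _ _ _ _ K) inB
    (fun x => eqvt x (kq_mul x ep)) /\
  left_projective eqvt (@kq_add _ _ _ _ K) (@kq_mul _ _ _ _ K) inB
    (fun x => eqvt x (kq_mul ep x)).
Proof.
move=> _ _ _; case: A => [|B] // _ gt eqvt ep inB; split.
- apply: (right_gen (Uzs V E B)) => //.
  + exact: cR_start.
  + exact: cR_pend.
  + exact: cR_fact.
  + move=> j; exact: HG.
  + exact: Hep.
  + exact: Hep_s.
  + exact: Hep_p.
- apply: (left_gen (Uzs V E B)).
  + exact: Hep.
  + exact: Hep_s.
  + exact: Hep_p.
  + exact: dL_pend.
  + exact: dL_start.
  + exact: dL_fact.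
  + move=> j; exact: HGL.
Qed.
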